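(* Let $\mathcal B\subseteq P(D)$ be a Boolean algebra with $|\mathcal B|<\mathfrak b$ and let $\mathcal S=\{S_n:n\in\omega\}$ be an $s$-family with each $S_n(k)\in\mathcal B$. For $g\in\omega^\omega$ let $X_g=\bigcup_{n\in\omega}S_n(g(n))$. Then there exists $g_0\in\omega^\omega$ such that for every $g\in\omega^\omega$ with $g\ge g_0$ (pointwise) and every $A\in\mathcal B$ with $A\subseteq X_g$, there is $N\in\omega$ with $A\subseteq\bigcup_{j\le N}S_j(g(j))$.
   Context: $\mathfrak b$ is the bounding number. $\lambda$ is the product measure on $2^\omega$, $D\subseteq 2^\omega$ a fixed countable dense set, $\mathcal A_0$ the subalgebra of $P(D)$ generated by $\{C\cap D: C \text{ clopen}\}$ and the finite subsets of $D$, $\mu_0((C\cap D)\triangle F)=\lambda(C)$ for $C$ clopen and $F$ finite. An $s$-family is a countable family $\mathcal S$ of sequences $(S(k))_{k\in\omega}$ of elements of $\mathcal A_0$ with $S(0)\supseteq S(1)\supseteq\cdots$, $\bigcap_kS(k)=\emptyset$ and $\lim_k\mu_0(S(k))=0$. *)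

(* Defs.v *)
From Stdlib Require Import Reals List.
Import ListNotations.
Open Scope R_scope.

Definition cantor := nat -> bool.

Definition ext (w : list bool) : cantor := fun i => nth i w false.

Definition restr_eq (n : nat) (x y : cantor) : Prop :=
  forall i, (i < n)%nat -> x i = y i.

Definition depends_on (n : nat) (C : cantor -> Prop) : Prop :=
  forall x y, restr_eq n x y -> (C x <-> C y).

Definition is_open (C : cantor -> Prop) : Prop :=
  forall x, C x -> exists n, forall y, restr_eq n x y -> C y.

Definition clopen (C : cantor -> Prop) : Prop :=
  is_open C /\ is_open (fun x => ~ C x).

Definition lambda_is (C : cantor -> Prop) (r : R) : Prop :=
  exists (n : nat) (W : list (list bool)),
    depends_on n C /\ NoDup W /\
    (forall w, In w W <-> (length w = n /\ C (ext w))) /\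
    r = INR (length W) / 2 ^ n.

(* D = range of d, d injective; subsets of D are identified with subsets of nat. *)
Definition dense_enum (d : nat -> cantor) : Prop :=
  (forall i j, d i = d j -> i = j) /\
  (forall w : list bool, exists i, forall j, (j < length w)%nat -> d i j = nth j w false).

Definition finite_set (F : nat -> Prop) : Prop :=
  exists m, forall i, F i -> (i < m)%nat.

Definition trace (d : nat -> cantor) (C : cantor -> Prop) : nat -> Prop :=
  fun i => C (d i).

Definition symdiff (A F : nat -> Prop) : nat -> Prop :=
  fun i => (A i /\ ~ F i) \/ (~ A i /\ F i).

Inductive A0 (d : nat -> cantor) : (nat -> Prop) -> Prop :=
| A0_clopen : forall C, clopen C -> A0 d (trace d C)
| A0_finite : forall F, finite_set F -> A0 d F
| A0_compl : forall A, A0 d A -> A0 d (fun i => ~ A i)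
| A0_union : forall A A', A0 d A -> A0 d A' -> A0 d (fun i => A i \/ A' i)
| A0_ext : forall A A', A0 d A -> (forall i, A i <-> A' i) -> A0 d A'.

Definition mu0_is (d : nat -> cantor) (A : nat -> Prop) (r : R) : Prop :=
  exists C F, clopen C /\ finite_set F /\
    (forall i, A i <-> symdiff (trace d C) F i) /\ lambda_is C r.

Definition s_seq (d : nat -> cantor) (T : nat -> nat -> Prop) : Prop :=
  (forall k, A0 d (T k)) /\
  (forall k i, T (Datatypes.S k) i -> T k i) /\
  (forall i, ~ (forall k, T k i)) /\
  (forall eps, eps > 0 -> exists K, forall k, (K <= k)%nat ->
      exists r, mu0_is d (T k) r /\ Rabs r < eps).

Definition s_family (d : nat -> cantor) (S : nat -> nat -> nat -> Prop) : Prop :=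
  forall n, s_seq d (S n).

Definition bool_alg (B : (nat -> Prop) -> Prop) : Prop :=
  B (fun _ => False) /\
  (forall A, B A -> B (fun i => ~ A i)) /\
  (forall A A', B A -> B A' -> B (fun i => A i \/ A' i)).

(* |X| < b  : every family of functions in omega^omega indexed by X
   (i.e. of size <= |X|) is <=*-bounded *)
Definition lt_bounding (X : Type) : Prop :=
  forall F : X -> nat -> nat, exists h : nat -> nat,
    forall x, exists m, forall n, (m <= n)%nat -> (F x n <= h n)%nat.

Definition X_g (S : nat -> nat -> nat -> Prop) (g : nat -> nat) : nat -> Prop :=
  fun i => exists n, S n (g n) i.

(* Main.v *)
Require Import Defs.
From Stdlib Require Import Reals List.
From Stdlib Require Import Classical ClassicalEpsilon Lia Arith.

Local Open Scope nat_scope.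

Definition Good (K : nat -> nat -> nat) (E : (nat -> nat) -> nat -> Prop) (f : nat -> nat) :=
  forall t, (exists x, E t x) -> exists p, E t p /\ forall m, K m p <= f m.

Lemma Good_mono K E f f' : (forall m, f m <= f' m) -> Good K E f -> Good K E f'.
Proof.
  intros Hf H t Ht. destruct (H t Ht) as [p [Hp1 Hp2]]. exists p; split; auto.
  intro m; specialize (Hp2 m); specialize (Hf m); lia.
Qed.

Lemma combine_list {A} (L : list A) (P : A -> (nat -> nat) -> Prop)
  (Pmono : forall a f f', (forall m, f m <= f' m) -> P a f -> P a f') :
  (forall a, In a L -> exists f, P a f) -> exists f, forall a, In a L -> P a f.
Proof.
  induction L as [|a L IH]; intros H.
  - exists (fun _ => 0). intros a [].
  - destruct (H a (or_introl eq_refl)) as [f1 Hf1].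
    destruct IH as [f2 Hf2]. { intros b Hb. apply H. right; auto. }
    exists (fun m => max (f1 m) (f2 m)). intros b [Hb|Hb]; [subst b|].
    + apply (Pmono a f1); auto. intro; lia.
    + apply (Pmono b f2); auto. intro; lia.
Qed.

Definition mono (E : (nat -> nat) -> nat -> Prop) :=
  forall t t', (forall j, t j <= t' j) -> forall x, E t x -> E t' x.
Definition dep (I : list nat) (E : (nat -> nat) -> nat -> Prop) :=
  forall t t', (forall j, In j I -> t j = t' j) -> forall x, E t x -> E t' x.

Definition upd (t : nat -> nat) (i v : nat) : nat -> nat :=
  fun j => if Nat.eq_dec j i then v else t j.

Lemma dickson K : forall n (I : list nat), length I <= n -> forall E, mono E -> dep I E ->
  exists f, Good K E f.
Proof.
  induction n as [|n IHn]; intros I HI E Hm Hd.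
  - destruct I; [|simpl in HI; lia].
    destruct (classic (exists u a, E u a)) as [[u [a Ha]]|Hn].
    + exists (fun m => K m a). intros t _. exists a. split; auto.
      apply (Hd u t); auto. intros j [].
    + exists (fun _ => 0). intros t [x Hx]. exfalso; eauto.
  - destruct (classic (exists u a, E u a)) as [[u [a Ha]]|Hn].
    2:{ exists (fun _ => 0). intros t [x Hx]. exfalso; eauto. }
    set (L := flat_map (fun i => map (fun v => (i, v)) (seq 0 (u i))) I).
    destruct (combine_list L (fun iv f => Good K (fun t => E (upd t (fst iv) (snd iv))) f))
      as [F HF].
    { intros; eapply Good_mono; eauto. }
    { intros [i v] Hiv. unfold L in Hiv. apply in_flat_map in Hiv.
      destruct Hiv as [i' [Hi' Hv]]. apply in_map_iff in Hv.
      destruct Hv as [v' [Heq _]]. inversion Heq; subst.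
      apply (IHn (remove Nat.eq_dec i I)).
      - pose proof (remove_length_lt Nat.eq_dec I i Hi'). lia.
      - intros t t' Htt x. apply Hm. intro j; unfold upd; simpl.
        destruct (Nat.eq_dec j i); auto.
      - intros t t' Htt x. apply Hd. intros j Hj; unfold upd; simpl.
        destruct (Nat.eq_dec j i); auto. apply Htt. apply in_in_remove; auto. }
    exists (fun m => max (K m a) (F m)).
    intros t [x Hx].
    destruct (classic (exists i, In i I /\ t i < u i)) as [[i [Hi Hlt]]|Hno].
    + assert (HinL : In (i, t i) L).
      { unfold L. apply in_flat_map. exists i; split; auto.
        apply in_map_iff. exists (t i); split; auto. apply in_seq; lia. }
      specialize (HF _ HinL t). simpl in HF.
      destruct HF as [p [Hp1 Hp2]].
      { exists x. apply (Hm t); auto. intro j; unfold upd.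
        destruct (Nat.eq_dec j i); subst; auto. }
      exists p; split.
      * apply (Hm (upd t i (t i))); auto. intro j; unfold upd.
        destruct (Nat.eq_dec j i); subst; auto.
      * intro m; specialize (Hp2 m); lia.
    + exists a. split.
      * apply (Hd (fun j => max (t j) (u j))).
        -- intros j Hj. destruct (le_lt_dec (u j) (t j)). lia.
           exfalso; apply Hno; eauto.
        -- apply (Hm u); auto. intro; lia.
      * intro m; lia.
Qed.

Fixpoint mu (G : nat -> nat) (n : nat) : nat :=
  match n with 0 => G 0 | Datatypes.S n' => max (mu G n') (G (Datatypes.S n')) end.

Lemma mu_ge G L n : L <= n -> G L <= mu G n.
Proof.
  induction n; intros H; simpl.
  - assert (L = 0) by lia; subst; auto.
  - destruct (Nat.eq_dec L (Datatypes.S n)); subst; [lia|].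
    specialize (IHn ltac:(lia)). lia.
Qed.

Theorem lemma4p2 (d : nat -> cantor) (Hd : dense_enum d)
  (B : (nat -> Prop) -> Prop) (HB : bool_alg B)
  (HBcard : lt_bounding {A : nat -> Prop | B A})
  (S : nat -> nat -> nat -> Prop) (HS : s_family d S)
  (HSB : forall n k, B (S n k)) :
  exists g0 : nat -> nat,
    forall g : nat -> nat, (forall n, (g0 n <= g n)%nat) ->
    forall A : nat -> Prop, B A -> (forall i, A i -> X_g S g i) ->
    exists N : nat, forall i, A i -> exists j, (j <= N)%nat /\ S j (g j) i.
Proof.
  assert (Hdec : forall n k k' i, k <= k' -> S n k' i -> S n k i).
  { intros n k k' i Hk. induction Hk; auto.
    intros H. apply IHHk. destruct (HS n) as [_ [H2 _]]. apply H2; auto. }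
  assert (HK : forall n i, {k | ~ S n k i}).
  { intros n i. apply constructive_indefinite_description.
    destruct (HS n) as [_ [_ [H3 _]]]. apply not_all_ex_not. apply H3. }
  set (K := fun n i => proj1_sig (HK n i)).
  assert (HKp : forall n i k, K n i <= k -> ~ S n k i).
  { intros n i k Hk Hs. apply (proj2_sig (HK n i)). eapply Hdec; eauto. }
  set (E := fun (x : {A : nat -> Prop | B A}) (L : nat) (t : nat -> nat) (i : nat) =>
              proj1_sig x i /\ forall j, j < L -> ~ S j (t j) i).
  assert (HG : forall x L, {f | Good K (E x L) f}).
  { intros x L. apply constructive_indefinite_description.
    apply (dickson K L (seq 0 L)). rewrite length_seq; auto.
    - intros t t' Htt i [H1 H2]. split; auto. intros j Hj Hs.
      apply (H2 j Hj). eapply Hdec; [apply Htt|]; eauto.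
    - intros t t' Htt i [H1 H2]. split; auto. intros j Hj.
      rewrite <- Htt. auto. apply in_seq; lia. }
  set (Fam := fun x n => mu (fun L => proj1_sig (HG x L) n) n).
  destruct (HBcard Fam) as [h Hh].
  exists h. intros g Hg A HA HAX.
  destruct (Hh (exist _ A HA)) as [m Hm].
  destruct (classic (exists i, A i /\ forall j, j < m -> ~ S j (g j) i)) as [[i [Hi Hj]]|Hno].
  - exfalso.
    destruct (proj2_sig (HG (exist _ A HA) m) g) as [p [[Hp1 Hp2] Hp3]].
    { exists i. split; auto. }
    simpl in Hp1. destruct (HAX p Hp1) as [n Hn].
    destruct (le_lt_dec m n) as [Hmn|Hmn].
    + apply (HKp n p (g n)); auto.
      specialize (Hp3 n). specialize (Hm n Hmn). specialize (Hg n).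
      assert (proj1_sig (HG (exist _ A HA) m) n <= Fam (exist _ A HA) n).
      { unfold Fam. apply (mu_ge (fun L => proj1_sig (HG (exist _ A HA) L) n)). auto. }
      lia.
    + exact (Hp2 n Hmn Hn).
  - exists m. intros i Hi.
    apply NNPP. intro Hc. apply Hno. exists i. split; auto.
    intros j Hj Hs. apply Hc. exists j. split; [lia|auto].
Qed.
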